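(* Let $a,b,c\ge 0$, $r\ge 0$, and for $t\in[0,1]$ let $$r_{h.d.}(t)=\min\big\{t\max(\alpha,\gamma)+(1-t)\gamma,\ t\gamma+(1-t)\max(\beta,\gamma)\big\}.$$ The DMT achieved by static QMF on the half-duplex $(a,b,c)$-relay channel, $$d_{QMF}(r)=\min\Big\{a+b+c-\alpha-\beta-\gamma \;:\; r_{h.d.}(1/2)\le r,\ 0\le\alpha\le a,\ 0\le\beta\le b,\ 0\le\gamma\le c\Big\},$$ is given by $$d_{QMF}(r)=\begin{cases}\big(\min(a,b)-r\big)^{+}+(c-r)^{+} & \text{if } c>\min(a,b),\\ \big(\min(a,b)+c-2r\big)^{+} & \text{if } c\le\min(a,b).\end{cases}$$
   Context: The $(a,b,c)$-relay channel: source $S$, half-duplex relay $R$ (cannot transmit and receive simultaneously), destination $D$; the source signal is broadcast to $R$ and $D$, and source and relay signals superpose at $D$. Channel gains $h_{sr},h_{rd},h_{sd}$ are i.i.d. $\mathcal{CN}(0,1)$, quasi-static, known only at receivers; average SNRs of S-R, R-D, S-D are $\rho^a,\rho^b,\rho^c$. The exponential orders are $\alpha=\lim_{\rho\to\infty}\frac{\log(1+|h_{sr}|^2\rho^a)}{\log\rho}$ and similarly $\beta,\gamma$ for $|h_{rd}|^2\rho^b$, $|h_{sd}|^2\rho^c$. Multiplexing gain $r=\lim R/\log\rho$, diversity $d=-\lim \log P_e/\log\rho$, $x^+=\max(x,0)$. Static QMF: the relay listens for half of the total duration, quantizes its received signal at the noise level, maps it to a random codeword and transmits it in the second half; the schedule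 is independent of channel realizations. With a relay listening fraction $t$, the QMF rate is within a constant of the half-duplex cut-set expression, whose high-SNR exponent is $r_{h.d.}(t)$, so that the scheme is in outage iff $r_{h.d.}(1/2)\le r$; this yields the optimization formula in the claim. *)

(* Defs.v *)
From Stdlib Require Import Reals.
Open Scope R_scope.

Definition pos_part (x : R) : R := Rmax x 0.

(* high-SNR exponent of the half-duplex cut-set bound with listening fraction t *)
Definition r_hd (t alpha beta gamma : R) : R :=
  Rmin (t * Rmax alpha gamma + (1 - t) * gamma)
       (t * gamma + (1 - t) * Rmax beta gamma).

Definition qmf_outage (a b c r alpha beta gamma : R) : Prop :=
  r_hd (1/2) alpha beta gamma <= r /\
  0 <= alpha <= a /\ 0 <= beta <= b /\ 0 <= gamma <= c.

Definition is_min (P : R -> Prop) (m : R) : Prop :=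
  P m /\ forall x, P x -> m <= x.

Definition dqmf_set (a b c r : R) : R -> Prop :=
  fun v => exists alpha beta gamma,
    qmf_outage a b c r alpha beta gamma /\ v = a + b + c - alpha - beta - gamma.

Definition dqmf_closed (a b c r : R) : R :=
  if Rlt_dec (Rmin a b) c
  then pos_part (Rmin a b - r) + pos_part (c - r)
  else pos_part (Rmin a b + c - 2 * r).

(* Main.v *)
Require Import Defs.
From Stdlib Require Import Reals Lra.
Open Scope R_scope.

Ltac crush := unfold dqmf_closed, pos_part, qmf_outage, r_hd, Rmin, Rmax in *;
  repeat match goal with
 | |- context [Rle_dec ?x ?y] => destruct (Rle_dec x y)
 | H: context [Rle_dec ?x ?y] |- _ => destruct (Rle_dec x y)
 | |- context [Rlt_dec ?x ?y] => destruct (Rlt_dec x y)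
 end; try lra.

Theorem lemma2 (a b c r : R) (ha : 0 <= a) (hb : 0 <= b) (hc : 0 <= c)
  (hr : 0 <= r) :
  is_min (dqmf_set a b c r) (dqmf_closed a b c r).
Proof.
  split.
  - destruct (Rle_dec a b).
    + exists (Rmin a (2*r - Rmin c r)), b, (Rmin c r). split; crush.
    + exists a, (Rmin b (2*r - Rmin c r)), (Rmin c r). split; crush.
  - intros x [al [be [ga [[H1 [H2 [H3 H4]]] ->]]]]. crush.
Qed.
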